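(* There is a meta-extendable collection of admissible sets $S_0,S_1,S_2\subseteq\{0,1,2\}^{11}$ such that $S_1$ and $S_2$ are each admissible sets consisting of $\binom{11}{7}$ vectors of weight $7$, and $S_0$ is an admissible set of $37$ vectors, each of weight $3$ (with pairwise distinct supports).
   Context: A set $S\subseteq\{0,1,2\}^m$ is admissible if (1) for all distinct $s,s'\in S$ there are coordinates $i,j$ with $s_i=0\neq s'_i$ and $s_j\neq 0=s'_j$; and (2) for all distinct $s,s',s''\in S$ there is a coordinate $k$ such that the multiset $\{s_k,s'_k,s''_k\}$ equals $\{0,1,2\}$, $\{0,0,1\}$ or $\{0,0,2\}$. The weight of a vector is its number of nonzero coordinates, its support the set of nonzero coordinates. A collection $S_0,S_1,S_2\subseteq\{0,1,2\}^m$ of admissible sets is meta-extendable if: (1) for any $s\in S_0$ and $s'\in S_1\cup S_2$, the weight of $s$ is less than the weight of $s'$; (2) whenever $x,y\in S_0$ (not necessarily distinct) and $z\in S_1\cup S_2$, there is a coordinate $k$ with the multiset $\{x_k,y_k,z_k\}$ equal to $\{0,1,2\}$, $\{0,0,1\}$ or $\{0,0,2\}$; (3) whenever $x\in S_0$, $y\in S_1$, $z\in S_2$, there is a coordinate $k$ with the multiset $\{x_k,y_k,z_k\}$ equal to $\{0,1,2\}$, $\{0,0,1\}$ or $\{0,0,2\}$. *)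

(* Defs.v *)
From mathcomp Require Import all_boot.
Set Implicit Arguments. Unset Strict Implicit. Unset Printing Implicit Defensive.

Definition vec (m : nat) := {ffun 'I_m -> 'I_3}.

Definition good_triple (a b c : 'I_3) : bool :=
  let l := [:: nat_of_ord a; nat_of_ord b; nat_of_ord c] in
  [|| perm_eq l [:: 0; 1; 2], perm_eq l [:: 0; 0; 1] | perm_eq l [:: 0; 0; 2]].

Definition covered (m : nat) (x y z : vec m) : bool :=
  [exists k : 'I_m, good_triple (x k) (y k) (z k)].

Definition supp (m : nat) (s : vec m) : {set 'I_m} := [set i | nat_of_ord (s i) != 0].
Definition weight (m : nat) (s : vec m) : nat := #|supp s|.

Definition admissible (m : nat) (S : {set vec m}) : Prop :=
  (forall s s', s \in S -> s' \in S -> s != s' ->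
     exists i j : 'I_m, [/\ nat_of_ord (s i) = 0, nat_of_ord (s' i) != 0,
                            nat_of_ord (s j) != 0 & nat_of_ord (s' j) = 0]) /\
  (forall s s' s'', s \in S -> s' \in S -> s'' \in S ->
     s != s' -> s != s'' -> s' != s'' -> covered s s' s'').

Definition meta_extendable (m : nat) (S0 S1 S2 : {set vec m}) : Prop :=
  [/\ [/\ admissible S0, admissible S1 & admissible S2],
      (forall s s', s \in S0 -> s' \in S1 :|: S2 -> weight s < weight s'),
      (forall x y z, x \in S0 -> y \in S0 -> z \in S1 :|: S2 -> covered x y z) &
      (forall x y z, x \in S0 -> y \in S1 -> z \in S2 -> covered x y z)].

(* Main.v *)
Require Import Defs.
From mathcomp Require Import all_boot.
Set Implicit Arguments. Unset Strict Implicit. Unset Printing Implicit Defensive.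

Definition g (a b c : nat) : bool :=
  match a == 0, b == 0, c == 0 with
  | true, true, false | true, false, true | false, true, true => true
  | true, false, false => b != c
  | false, true, false => a != c
  | false, false, true => a != b
  | _, _, _ => false end.

Lemma g_spec a b c : a < 3 -> b < 3 -> c < 3 ->
  g a b c = [|| perm_eq [:: a; b; c] [:: 0; 1; 2], perm_eq [:: a; b; c] [:: 0; 0; 1]
              | perm_eq [:: a; b; c] [:: 0; 0; 2]].
Proof. by case: a => [|[|[|a]]] //; case: b => [|[|[|b]]] //; case: c => [|[|[|c]]]. Qed.
Lemma g12 a b c : g a b c = g b a c.
Proof. by rewrite /g; case: a => [|a]; case: b => [|b]; case: c => [|c] //=; rewrite eq_sym. Qed.
Lemma g23 a b c : g a b c = g a c b.
Proof. by rewrite /g; case: a => [|a]; case: b => [|b]; case: c => [|c] //=; rewrite eq_sym. Qed.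

Definition sw (a : nat) : nat := match a with 1 => 2 | 2 => 1 | n => n end.
Lemma sw_inj : injective sw.
Proof. by case=> [|[|[|a]]] [|[|[|b]]]. Qed.
Lemma sw0 a : (sw a == 0) = (a == 0). Proof. by case: a => [|[|[|a]]]. Qed.
Lemma g_sw a b c : g (sw a) (sw b) (sw c) = g a b c.
Proof. by rewrite /g !sw0 !(inj_eq sw_inj). Qed.

Fixpoint covl (x y z : seq nat) : bool :=
  match x, y, z with
  | a :: x', b :: y', c :: z' => g a b c || covl x' y' z'
  | _, _, _ => false end.

Lemma covl12 x y z : covl x y z = covl y x z.
Proof.
elim: x y z => [|a x IH] [|b y] [|c z] //=. by rewrite g12 IH.
Qed.
Lemma covl23 x y z : covl x y z = covl x z y.
Proof.
elim: x y z => [|a x IH] [|b y] [|c z] //=. by rewrite g23 IH.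
Qed.
Lemma covl_sw x y z : covl (map sw x) (map sw y) (map sw z) = covl x y z.
Proof.
elim: x y z => [|a x IH] [|b y] [|c z] //=. by rewrite g_sw IH.
Qed.
Lemma covl_nth x y z : covl x y z ->
  exists2 k, k < size x & g (nth 0 x k) (nth 0 y k) (nth 0 z k).
Proof.
elim: x y z => [|a x IH] [|b y] [|c z] //=. case/orP.
  by move=> H; exists 0.
by case/IH=> k Hk Hg; exists k.+1.
Qed.

Fixpoint check2 (P : seq nat -> seq nat -> bool) (L : seq (seq nat)) : bool :=
  match L with [::] => true | b :: L' => all (P b) L' && check2 P L' end.
Fixpoint check3 (R : seq nat -> seq nat -> seq nat -> bool) (L : seq (seq nat)) : bool :=
  match L with [::] => true | a :: L' => check2 (R a) L' && check3 R L' end.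

Lemma check2P P L : (forall y z, P y z = P z y) -> check2 P L ->
  forall y z, y \in L -> z \in L -> y != z -> P y z.
Proof.
move=> Ps; elim: L => [|a L IH] //= /andP[/allP Ha HL] y z.
rewrite !inE; case: (eqVneq y a) => [->|ya] /=.
  move=> _ Hz; case: (eqVneq z a) => [->|za]; first by [].
  by move=> _; apply: Ha; move: Hz; rewrite (negbTE za).
move=> Hy; case: (eqVneq z a) => [->|za] /= Hz yz.
  by rewrite Ps; apply: Ha.
exact: IH.
Qed.

Lemma check3P R L : (forall x y z, R x y z = R y x z) -> (forall x y z, R x y z = R x z y) ->
  check3 R L -> forall x y z, x \in L -> y \in L -> z \in L -> x != y -> x != z -> y != z -> R x y z.
Proof.
move=> R12 R23; elim: L => [|a L IH] //= /andP[H2 H3] x y z.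
have H2' := check2P (fun y z => R23 a y z) H2.
rewrite !inE.
case: (eqVneq x a) => [->|xa] /=.
  move=> _ Hy Hz ay az yz; apply: H2' => //.
    by move: Hy; rewrite eq_sym (negbTE ay).
  by move: Hz; rewrite eq_sym (negbTE az).
move=> Hx.
case: (eqVneq y a) => [->|ya] /=.
  move=> _ Hz _ xz az; rewrite R12; apply: H2' => //.
  by move: Hz; rewrite eq_sym (negbTE az).
move=> Hy.
case: (eqVneq z a) => [->|za] /=.
  move=> _ xy _ _; rewrite R23 R12; apply: H2' => //.
move=> Hz; exact: IH.
Qed.

Lemma check2_map f P L : check2 P (map f L) = check2 (fun a b => P (f a) (f b)) L.
Proof. by elim: L => //= a L ->; rewrite all_map. Qed.
Lemma check3_map f R L : check3 R (map f L) = check3 (fun a b c => R (f a) (f b) (f c)) L.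
Proof. by elim: L => //= a L ->; rewrite check2_map. Qed.

Definition valid (l : seq nat) : bool := (size l == 11) && all (fun a => a < 3) l.

Definition mkvec (l : seq nat) : vec 11 := [ffun i : 'I_11 => (inord (nth 0 l i) : 'I_3)].

Lemma mkvecE l i : all (fun a => a < 3) l -> nat_of_ord (mkvec l i) = nth 0 l i.
Proof.
move=> Ha; rewrite ffunE inordK //.
case: (ltnP i (size l)) => Hi; first by apply: (allP Ha); exact: mem_nth.
by rewrite nth_default.
Qed.

Lemma covered_mk x y z : valid x -> valid y -> valid z -> covl x y z ->
  covered (mkvec x) (mkvec y) (mkvec z).
Proof.
move=> /andP[/eqP Sx Ax] /andP[_ Ay] /andP[_ Az] /covl_nth[k Hk Hg].
rewrite Sx in Hk; apply/existsP; exists (Ordinal Hk).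
rewrite /good_triple !mkvecE //= -g_spec //.
- by rewrite -(mkvecE (Ordinal Hk) Ax).
- by rewrite -(mkvecE (Ordinal Hk) Ay).
- by rewrite -(mkvecE (Ordinal Hk) Az).
Qed.

Lemma cnt (l : seq nat) (P : pred nat) : size l = 11 ->
  #|[set i : 'I_11 | P (nth 0 l i)]| = count P l.
Proof.
move=> Hs.
rewrite cardsE cardE /enum_mem size_filter.
rewrite -[in RHS](mkseq_nth 0 l) Hs /mkseq -val_enum_ord count_map count_map -enumT.
by apply: eq_count => i.
Qed.

Lemma weight_mk l : valid l -> weight (mkvec l) = count (fun a => a != 0) l.
Proof.
move=> /andP[/eqP Hs Ha]; rewrite /weight /supp -(cnt (fun a => a != 0) Hs).
by apply: eq_card => i; rewrite !inE mkvecE.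
Qed.

Lemma supp_mk x y : valid x -> valid y -> supp (mkvec x) = supp (mkvec y) ->
  map (fun a => a != 0) x = map (fun a => a != 0) y.
Proof.
move=> /andP[/eqP Sx Ax] /andP[/eqP Sy Ay] E.
apply: (@eq_from_nth _ false); first by rewrite !size_map Sx Sy.
move=> i; rewrite size_map Sx => Hi.
rewrite !(nth_map 0) ?Sx ?Sy //.
have := congr1 (fun S : {set 'I_11} => Ordinal Hi \in S) E; rewrite /supp !inE !mkvecE //.
Qed.

Lemma mk_inj x y : valid x -> valid y -> mkvec x = mkvec y -> x = y.
Proof.
move=> /andP[/eqP Sx Ax] /andP[/eqP Sy Ay] E.
apply: (@eq_from_nth _ 0); first by rewrite Sx Sy.
move=> i; rewrite Sx => Hi.
by rewrite -(mkvecE (Ordinal Hi) Ax) -(mkvecE (Ordinal Hi) Ay) E.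
Qed.

Definition mkS (L : seq (seq nat)) : {set vec 11} := [set v in map mkvec L].

Lemma inS L s : s \in mkS L -> exists2 l, l \in L & s = mkvec l.
Proof. by rewrite inE => /mapP. Qed.

Definition pairok (x y : seq nat) : bool :=
  has (fun k => (nth 0 x k == 0) && (nth 0 y k != 0)) (iota 0 11) &&
  has (fun k => (nth 0 x k != 0) && (nth 0 y k == 0)) (iota 0 11).

Lemma adm_of L : all valid L -> all (fun x => all (fun y => (x == y) || pairok x y) L) L ->
  check3 covl L -> admissible (mkS L).
Proof.
move=> /allP V /allP P C; split.
  move=> s s' /inS[x Hx ->] /inS[y Hy ->] ne.
  have xy : x != y by apply: contraNneq ne => ->.
  have := allP (P x Hx) y Hy; rewrite (negbTE xy) /= => /andP[/hasP[i Hi Hi'] /hasP[j Hj Hj']].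
  have {}Hi : i < 11 by move: Hi; rewrite mem_iota.
  have {}Hj : j < 11 by move: Hj; rewrite mem_iota.
  have Ax := (elimT andP (V x Hx)).2; have Ay := (elimT andP (V y Hy)).2.
  exists (Ordinal Hi), (Ordinal Hj); rewrite !mkvecE //.
  by move: Hi' Hj' => /andP[/eqP -> ->] /andP[-> /eqP ->].
move=> s s' s'' /inS[x Hx ->] /inS[y Hy ->] /inS[z Hz ->] n1 n2 n3.
apply: covered_mk; [exact: V|exact: V|exact: V|].
apply: (check3P covl12 covl23 C) => //.
- by apply: contraNneq n1 => ->.
- by apply: contraNneq n2 => ->.
- by apply: contraNneq n3 => ->.
Qed.

Lemma card_mkS L : all valid L -> uniq L -> #|mkS L| = size L.
Proof.
move=> /allP V U.
have U' : uniq (map mkvec L).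
  rewrite (map_inj_in_uniq _) //.
  by move=> x y Hx Hy; apply: mk_inj; [exact: V|exact: V].
by rewrite cardsE; move/card_uniqP: U' => ->; rewrite size_map.
Qed.
Definition L0 : seq (seq nat) := [::
  [:: 0; 0; 0; 0; 0; 0; 0; 0; 1; 1; 1];
  [:: 0; 0; 0; 0; 0; 0; 0; 2; 0; 2; 2];
  [:: 0; 0; 0; 0; 0; 0; 0; 2; 2; 0; 2];
  [:: 0; 0; 0; 0; 0; 0; 1; 1; 0; 0; 1];
  [:: 0; 0; 0; 0; 0; 1; 1; 0; 0; 1; 0];
  [:: 0; 0; 0; 0; 0; 1; 1; 0; 1; 0; 0];
  [:: 0; 0; 0; 0; 1; 1; 0; 0; 0; 1; 0];
  [:: 0; 0; 0; 0; 2; 0; 0; 0; 0; 2; 2];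
  [:: 0; 0; 0; 0; 2; 0; 2; 2; 0; 0; 0];
  [:: 0; 0; 0; 0; 2; 2; 2; 0; 0; 0; 0];
  [:: 0; 0; 0; 1; 0; 0; 1; 0; 0; 0; 1];
  [:: 0; 0; 0; 1; 0; 1; 0; 0; 0; 0; 1];
  [:: 0; 0; 0; 2; 0; 0; 0; 0; 0; 2; 2];
  [:: 0; 0; 0; 2; 0; 2; 0; 2; 0; 0; 0];
  [:: 0; 0; 0; 2; 2; 0; 0; 2; 0; 0; 0];
  [:: 0; 0; 1; 0; 0; 1; 0; 0; 1; 0; 0];
  [:: 0; 0; 1; 1; 0; 0; 0; 0; 1; 0; 0];
  [:: 0; 0; 1; 1; 0; 0; 1; 0; 0; 0; 0];
  [:: 0; 0; 2; 0; 0; 0; 0; 0; 0; 2; 2];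
  [:: 0; 0; 2; 0; 0; 2; 2; 0; 0; 0; 0];
  [:: 0; 0; 2; 0; 2; 0; 0; 2; 0; 0; 0];
  [:: 0; 1; 0; 0; 0; 0; 0; 1; 0; 1; 0];
  [:: 0; 1; 0; 0; 0; 1; 0; 0; 1; 0; 0];
  [:: 0; 1; 0; 1; 0; 0; 0; 0; 1; 0; 0];
  [:: 0; 1; 1; 0; 0; 0; 0; 0; 0; 0; 1];
  [:: 0; 1; 1; 0; 0; 0; 1; 0; 0; 0; 0];
  [:: 0; 2; 0; 0; 0; 0; 0; 0; 2; 0; 2];
  [:: 0; 2; 2; 0; 0; 0; 0; 2; 0; 0; 0];
  [:: 1; 0; 0; 0; 0; 0; 0; 0; 1; 0; 1];
  [:: 1; 0; 0; 0; 1; 0; 0; 0; 0; 1; 0];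
  [:: 1; 0; 0; 1; 0; 0; 1; 0; 0; 0; 0];
  [:: 1; 0; 1; 0; 0; 0; 0; 0; 1; 0; 0];
  [:: 2; 0; 0; 0; 0; 0; 0; 2; 0; 0; 2];
  [:: 2; 0; 0; 2; 0; 2; 0; 0; 0; 0; 0];
  [:: 2; 0; 2; 0; 2; 0; 0; 0; 0; 0; 0];
  [:: 2; 0; 2; 2; 0; 0; 0; 0; 0; 0; 0];
  [:: 2; 2; 0; 0; 0; 0; 2; 0; 0; 0; 0]].
Definition L1 : seq (seq nat) := [::
  [:: 2; 1; 2; 1; 1; 1; 2; 0; 0; 0; 0];
  [:: 1; 1; 1; 2; 1; 1; 0; 1; 0; 0; 0];
  [:: 1; 2; 1; 1; 2; 1; 0; 0; 2; 0; 0];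
  [:: 1; 2; 2; 2; 1; 1; 0; 0; 0; 1; 0];
  [:: 1; 2; 1; 1; 1; 2; 0; 0; 0; 0; 2];
  [:: 2; 1; 2; 2; 1; 0; 1; 1; 0; 0; 0];
  [:: 1; 1; 2; 1; 2; 0; 2; 0; 1; 0; 0];
  [:: 1; 2; 2; 2; 1; 0; 1; 0; 0; 1; 0];
  [:: 1; 1; 2; 1; 1; 0; 1; 0; 0; 0; 1];
  [:: 1; 1; 2; 1; 1; 0; 0; 2; 2; 0; 0];
  [:: 2; 1; 1; 1; 2; 0; 0; 1; 0; 2; 0];
  [:: 2; 1; 1; 2; 1; 0; 0; 2; 0; 0; 1];
  [:: 1; 2; 2; 2; 1; 0; 0; 0; 1; 1; 0];
  [:: 2; 2; 2; 1; 1; 0; 0; 0; 1; 0; 1];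
  [:: 2; 1; 1; 1; 2; 0; 0; 0; 0; 2; 1];
  [:: 1; 2; 1; 1; 0; 1; 2; 2; 0; 0; 0];
  [:: 2; 1; 1; 1; 0; 1; 1; 0; 1; 0; 0];
  [:: 1; 1; 1; 2; 0; 1; 2; 0; 0; 2; 0];
  [:: 1; 2; 2; 1; 0; 1; 1; 0; 0; 0; 2];
  [:: 1; 1; 2; 2; 0; 1; 0; 2; 1; 0; 0];
  [:: 1; 2; 2; 1; 0; 1; 0; 1; 0; 2; 0];
  [:: 1; 2; 1; 2; 0; 2; 0; 1; 0; 0; 1];
  [:: 2; 1; 2; 1; 0; 1; 0; 0; 2; 1; 0];
  [:: 2; 2; 2; 1; 0; 1; 0; 0; 1; 0; 1];
  [:: 1; 2; 1; 1; 0; 1; 0; 0; 0; 1; 1];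
  [:: 2; 1; 2; 2; 0; 0; 1; 1; 1; 0; 0];
  [:: 1; 2; 1; 1; 0; 0; 2; 2; 0; 1; 0];
  [:: 1; 2; 1; 1; 0; 0; 2; 2; 0; 0; 1];
  [:: 2; 1; 1; 2; 0; 0; 2; 0; 1; 1; 0];
  [:: 1; 1; 1; 2; 0; 0; 1; 0; 2; 0; 2];
  [:: 1; 1; 2; 1; 0; 0; 2; 0; 0; 1; 2];
  [:: 1; 1; 2; 1; 0; 0; 0; 1; 1; 1; 0];
  [:: 2; 2; 2; 1; 0; 0; 0; 1; 1; 0; 1];
  [:: 2; 2; 1; 1; 0; 0; 0; 1; 0; 1; 2];
  [:: 1; 1; 1; 2; 0; 0; 0; 0; 2; 1; 2];
  [:: 1; 1; 1; 0; 1; 1; 2; 1; 0; 0; 0];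
  [:: 2; 2; 1; 0; 1; 1; 1; 0; 2; 0; 0];
  [:: 1; 1; 2; 0; 1; 2; 1; 0; 0; 2; 0];
  [:: 2; 1; 1; 0; 1; 2; 2; 0; 0; 0; 1];
  [:: 1; 1; 1; 0; 1; 1; 0; 1; 2; 0; 0];
  [:: 1; 1; 1; 0; 1; 1; 0; 1; 0; 2; 0];
  [:: 1; 1; 1; 0; 1; 1; 0; 1; 0; 0; 2];
  [:: 2; 1; 2; 0; 1; 1; 0; 0; 2; 1; 0];
  [:: 1; 1; 2; 0; 1; 2; 0; 0; 2; 0; 1];
  [:: 2; 2; 1; 0; 1; 1; 0; 0; 0; 2; 1];
  [:: 1; 1; 2; 0; 2; 0; 2; 1; 1; 0; 0];
  [:: 1; 2; 1; 0; 2; 0; 1; 1; 0; 2; 0];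
  [:: 1; 2; 2; 0; 1; 0; 2; 1; 0; 0; 1];
  [:: 1; 1; 2; 0; 2; 0; 2; 0; 1; 1; 0];
  [:: 2; 2; 1; 0; 1; 0; 1; 0; 2; 0; 1];
  [:: 2; 1; 2; 0; 2; 0; 1; 0; 0; 1; 1];
  [:: 1; 1; 1; 0; 2; 0; 0; 2; 2; 1; 0];
  [:: 1; 2; 1; 0; 1; 0; 0; 2; 1; 0; 2];
  [:: 2; 2; 1; 0; 1; 0; 0; 1; 0; 1; 2];
  [:: 2; 1; 1; 0; 1; 0; 0; 0; 1; 1; 1];
  [:: 1; 1; 1; 0; 0; 2; 1; 2; 2; 0; 0];
  [:: 2; 1; 1; 0; 0; 1; 1; 2; 0; 2; 0];
  [:: 1; 2; 2; 0; 0; 1; 1; 1; 0; 0; 2];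
  [:: 1; 2; 1; 0; 0; 2; 1; 0; 1; 2; 0];
  [:: 2; 1; 1; 0; 0; 2; 2; 0; 1; 0; 1];
  [:: 2; 1; 1; 0; 0; 2; 2; 0; 0; 1; 1];
  [:: 1; 2; 1; 0; 0; 2; 0; 1; 1; 2; 0];
  [:: 1; 1; 2; 0; 0; 2; 0; 1; 1; 0; 2];
  [:: 1; 1; 2; 0; 0; 1; 0; 2; 0; 2; 1];
  [:: 1; 2; 1; 0; 0; 2; 0; 0; 1; 2; 1];
  [:: 1; 2; 2; 0; 0; 0; 1; 2; 1; 1; 0];
  [:: 1; 2; 1; 0; 0; 0; 1; 1; 1; 0; 1];
  [:: 2; 2; 1; 0; 0; 0; 1; 1; 0; 1; 2];
  [:: 2; 1; 1; 0; 0; 0; 1; 0; 1; 2; 2];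
  [:: 1; 1; 2; 0; 0; 0; 0; 2; 1; 2; 1];
  [:: 1; 1; 0; 1; 2; 2; 2; 1; 0; 0; 0];
  [:: 2; 1; 0; 2; 1; 2; 1; 0; 1; 0; 0];
  [:: 1; 1; 0; 2; 1; 1; 2; 0; 0; 2; 0];
  [:: 1; 1; 0; 1; 1; 2; 1; 0; 0; 0; 1];
  [:: 2; 1; 0; 2; 1; 2; 0; 1; 1; 0; 0];
  [:: 1; 1; 0; 1; 1; 2; 0; 2; 0; 2; 0];
  [:: 2; 1; 0; 1; 1; 1; 0; 2; 0; 0; 2];
  [:: 1; 2; 0; 1; 2; 1; 0; 0; 2; 1; 0];
  [:: 1; 2; 0; 1; 2; 1; 0; 0; 2; 0; 1];
  [:: 1; 1; 0; 1; 2; 2; 0; 0; 0; 1; 2];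
  [:: 2; 1; 0; 1; 2; 0; 1; 2; 1; 0; 0];
  [:: 2; 1; 0; 1; 1; 0; 2; 2; 0; 1; 0];
  [:: 1; 1; 0; 1; 1; 0; 1; 2; 0; 0; 1];
  [:: 1; 1; 0; 2; 2; 0; 1; 0; 2; 1; 0];
  [:: 1; 1; 0; 1; 1; 0; 1; 0; 2; 0; 1];
  [:: 1; 1; 0; 1; 1; 0; 1; 0; 0; 2; 1];
  [:: 1; 1; 0; 1; 2; 0; 0; 1; 1; 1; 0];
  [:: 1; 2; 0; 1; 1; 0; 0; 2; 1; 0; 2];
  [:: 1; 2; 0; 1; 2; 0; 0; 2; 0; 1; 1];
  [:: 2; 1; 0; 1; 1; 0; 0; 0; 2; 1; 2];
  [:: 2; 2; 0; 1; 0; 1; 2; 1; 1; 0; 0];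
  [:: 1; 1; 0; 2; 0; 1; 2; 1; 0; 2; 0];
  [:: 1; 2; 0; 2; 0; 2; 1; 1; 0; 0; 1];
  [:: 2; 2; 0; 1; 0; 2; 1; 0; 1; 1; 0];
  [:: 2; 1; 0; 2; 0; 1; 1; 0; 2; 0; 1];
  [:: 2; 2; 0; 1; 0; 2; 1; 0; 0; 1; 1];
  [:: 1; 1; 0; 1; 0; 2; 0; 1; 1; 1; 0];
  [:: 1; 2; 0; 2; 0; 2; 0; 1; 1; 0; 1];
  [:: 2; 1; 0; 1; 0; 1; 0; 2; 0; 1; 2];
  [:: 1; 2; 0; 2; 0; 1; 0; 0; 1; 1; 2];
  [:: 1; 1; 0; 1; 0; 0; 2; 1; 1; 1; 0];
  [:: 1; 1; 0; 2; 0; 0; 2; 2; 1; 0; 1];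
  [:: 2; 1; 0; 1; 0; 0; 2; 1; 0; 2; 1];
  [:: 2; 1; 0; 1; 0; 0; 1; 0; 1; 2; 2];
  [:: 1; 1; 0; 1; 0; 0; 0; 1; 1; 1; 2];
  [:: 2; 2; 0; 0; 1; 1; 2; 1; 1; 0; 0];
  [:: 2; 1; 0; 0; 1; 1; 2; 2; 0; 1; 0];
  [:: 1; 1; 0; 0; 2; 1; 2; 2; 0; 0; 1];
  [:: 1; 2; 0; 0; 1; 1; 1; 0; 1; 1; 0];
  [:: 1; 1; 0; 0; 1; 1; 2; 0; 2; 0; 2];
  [:: 2; 2; 0; 0; 1; 1; 1; 0; 0; 2; 1];
  [:: 1; 1; 0; 0; 2; 1; 0; 2; 1; 2; 0];
  [:: 2; 1; 0; 0; 2; 1; 0; 1; 2; 0; 1];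
  [:: 1; 1; 0; 0; 2; 2; 0; 1; 0; 1; 2];
  [:: 1; 1; 0; 0; 2; 2; 0; 0; 1; 1; 2];
  [:: 1; 2; 0; 0; 2; 0; 1; 1; 1; 2; 0];
  [:: 2; 1; 0; 0; 2; 0; 1; 1; 2; 0; 1];
  [:: 1; 2; 0; 0; 2; 0; 1; 1; 0; 2; 1];
  [:: 1; 2; 0; 0; 1; 0; 2; 0; 2; 1; 1];
  [:: 2; 1; 0; 0; 2; 0; 0; 1; 2; 1; 1];
  [:: 1; 1; 0; 0; 0; 2; 1; 2; 2; 1; 0];
  [:: 2; 2; 0; 0; 0; 1; 2; 1; 1; 0; 1];
  [:: 2; 1; 0; 0; 0; 1; 1; 1; 0; 1; 1];
  [:: 2; 1; 0; 0; 0; 1; 1; 0; 1; 2; 2];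
  [:: 1; 1; 0; 0; 0; 1; 0; 1; 2; 2; 2];
  [:: 1; 2; 0; 0; 0; 0; 2; 1; 2; 1; 1];
  [:: 1; 0; 1; 2; 2; 2; 1; 1; 0; 0; 0];
  [:: 1; 0; 1; 2; 2; 2; 1; 0; 1; 0; 0];
  [:: 2; 0; 2; 1; 1; 1; 2; 0; 0; 1; 0];
  [:: 1; 0; 1; 2; 2; 2; 1; 0; 0; 0; 1];
  [:: 2; 0; 1; 1; 1; 2; 0; 1; 2; 0; 0];
  [:: 2; 0; 1; 2; 2; 1; 0; 1; 0; 1; 0];
  [:: 1; 0; 2; 1; 2; 1; 0; 1; 0; 0; 2];
  [:: 1; 0; 1; 2; 1; 1; 0; 0; 2; 2; 0];
  [:: 1; 0; 2; 1; 1; 2; 0; 0; 2; 0; 1];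
  [:: 1; 0; 1; 1; 2; 1; 0; 0; 0; 1; 1];
  [:: 2; 0; 1; 1; 2; 0; 1; 2; 1; 0; 0];
  [:: 2; 0; 1; 1; 1; 0; 1; 1; 0; 1; 0];
  [:: 1; 0; 2; 1; 2; 0; 1; 1; 0; 0; 2];
  [:: 2; 0; 1; 2; 1; 0; 2; 0; 1; 1; 0];
  [:: 1; 0; 1; 1; 2; 0; 2; 0; 2; 0; 1];
  [:: 1; 0; 1; 1; 1; 0; 2; 0; 0; 2; 2];
  [:: 2; 0; 2; 1; 1; 0; 0; 1; 1; 2; 0];
  [:: 2; 0; 1; 2; 1; 0; 0; 2; 1; 0; 1];
  [:: 2; 0; 1; 2; 1; 0; 0; 2; 0; 1; 1];
  [:: 1; 0; 1; 2; 2; 0; 0; 0; 1; 2; 1];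
  [:: 2; 0; 1; 1; 0; 2; 1; 1; 2; 0; 0];
  [:: 2; 0; 1; 1; 0; 1; 1; 2; 0; 2; 0];
  [:: 1; 0; 1; 2; 0; 1; 2; 1; 0; 0; 2];
  [:: 1; 0; 2; 1; 0; 1; 1; 0; 2; 2; 0];
  [:: 1; 0; 1; 1; 0; 2; 2; 0; 1; 0; 2];
  [:: 1; 0; 1; 1; 0; 1; 2; 0; 0; 1; 1];
  [:: 2; 0; 1; 1; 0; 2; 0; 1; 2; 1; 0];
  [:: 1; 0; 2; 2; 0; 1; 0; 2; 1; 0; 1];
  [:: 1; 0; 1; 1; 0; 1; 0; 2; 0; 1; 1];
  [:: 1; 0; 1; 1; 0; 1; 0; 0; 2; 1; 1];
  [:: 1; 0; 2; 1; 0; 0; 1; 1; 2; 2; 0];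
  [:: 1; 0; 1; 2; 0; 0; 1; 1; 1; 0; 1];
  [:: 2; 0; 1; 1; 0; 0; 2; 1; 0; 2; 1];
  [:: 2; 0; 1; 2; 0; 0; 2; 0; 1; 1; 1];
  [:: 1; 0; 1; 1; 0; 0; 0; 2; 1; 2; 2];
  [:: 1; 0; 2; 0; 2; 1; 1; 1; 2; 0; 0];
  [:: 1; 0; 2; 0; 1; 2; 2; 1; 0; 1; 0];
  [:: 2; 0; 1; 0; 1; 2; 1; 1; 0; 0; 2];
  [:: 1; 0; 2; 0; 1; 1; 1; 0; 1; 1; 0];
  [:: 1; 0; 2; 0; 1; 2; 1; 0; 2; 0; 1];
  [:: 2; 0; 2; 0; 2; 1; 1; 0; 0; 1; 1];
  [:: 2; 0; 2; 0; 1; 1; 0; 1; 1; 2; 0];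
  [:: 2; 0; 1; 0; 2; 1; 0; 1; 1; 0; 2];
  [:: 1; 0; 2; 0; 1; 1; 0; 2; 0; 1; 2];
  [:: 2; 0; 1; 0; 2; 1; 0; 0; 1; 1; 2];
  [:: 1; 0; 1; 0; 2; 0; 1; 2; 2; 1; 0];
  [:: 1; 0; 1; 0; 2; 0; 1; 1; 1; 0; 1];
  [:: 2; 0; 2; 0; 2; 0; 1; 1; 0; 1; 1];
  [:: 1; 0; 1; 0; 1; 0; 2; 0; 1; 2; 2];
  [:: 2; 0; 2; 0; 1; 0; 0; 1; 1; 2; 1];
  [:: 2; 0; 1; 0; 0; 1; 1; 2; 1; 2; 0];
  [:: 1; 0; 1; 0; 0; 2; 1; 1; 1; 0; 1];
  [:: 1; 0; 2; 0; 0; 2; 2; 1; 0; 1; 1];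
  [:: 1; 0; 1; 0; 0; 2; 1; 0; 2; 1; 2];
  [:: 1; 0; 1; 0; 0; 1; 0; 1; 2; 2; 2];
  [:: 1; 0; 1; 0; 0; 0; 1; 1; 1; 2; 1];
  [:: 2; 0; 0; 1; 2; 1; 1; 2; 1; 0; 0];
  [:: 1; 0; 0; 1; 1; 2; 1; 2; 0; 2; 0];
  [:: 2; 0; 0; 1; 1; 2; 1; 1; 0; 0; 2];
  [:: 1; 0; 0; 2; 1; 1; 1; 0; 1; 1; 0];
  [:: 1; 0; 0; 1; 1; 2; 2; 0; 1; 0; 2];
  [:: 1; 0; 0; 2; 1; 2; 2; 0; 0; 1; 1];
  [:: 2; 0; 0; 2; 2; 1; 0; 1; 1; 1; 0];
  [:: 2; 0; 0; 1; 1; 1; 0; 1; 1; 0; 1];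
  [:: 1; 0; 0; 1; 1; 2; 0; 2; 0; 2; 1];
  [:: 2; 0; 0; 1; 1; 1; 0; 0; 2; 1; 2];
  [:: 1; 0; 0; 2; 1; 0; 2; 1; 2; 1; 0];
  [:: 1; 0; 0; 2; 1; 0; 2; 1; 2; 0; 1];
  [:: 1; 0; 0; 2; 1; 0; 1; 2; 0; 1; 2];
  [:: 1; 0; 0; 2; 2; 0; 1; 0; 1; 2; 1];
  [:: 1; 0; 0; 2; 2; 0; 0; 1; 1; 2; 1];
  [:: 1; 0; 0; 1; 0; 1; 2; 2; 2; 1; 0];
  [:: 2; 0; 0; 2; 0; 1; 1; 1; 2; 0; 1];
  [:: 1; 0; 0; 2; 0; 1; 1; 2; 0; 1; 2];
  [:: 2; 0; 0; 2; 0; 1; 1; 0; 2; 1; 1];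
  [:: 2; 0; 0; 1; 0; 2; 0; 2; 1; 1; 1];
  [:: 1; 0; 0; 2; 0; 0; 1; 2; 1; 1; 2];
  [:: 1; 0; 0; 0; 1; 1; 1; 2; 1; 1; 0];
  [:: 1; 0; 0; 0; 2; 1; 2; 2; 1; 0; 1];
  [:: 2; 0; 0; 0; 1; 2; 1; 1; 0; 1; 2];
  [:: 1; 0; 0; 0; 1; 1; 1; 0; 1; 1; 2];
  [:: 1; 0; 0; 0; 1; 1; 0; 1; 2; 2; 2];
  [:: 1; 0; 0; 0; 1; 0; 1; 2; 2; 2; 1];
  [:: 2; 0; 0; 0; 0; 2; 1; 2; 1; 1; 1];
  [:: 0; 2; 1; 2; 1; 1; 1; 2; 0; 0; 0];
  [:: 0; 1; 1; 1; 2; 1; 1; 0; 1; 0; 0];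
  [:: 0; 1; 2; 1; 1; 2; 1; 0; 0; 2; 0];
  [:: 0; 1; 2; 2; 2; 1; 1; 0; 0; 0; 1];
  [:: 0; 2; 1; 2; 2; 1; 0; 1; 1; 0; 0];
  [:: 0; 1; 1; 2; 1; 2; 0; 2; 0; 1; 0];
  [:: 0; 1; 2; 2; 2; 1; 0; 1; 0; 0; 1];
  [:: 0; 1; 1; 2; 1; 1; 0; 0; 2; 2; 0];
  [:: 0; 2; 1; 1; 1; 2; 0; 0; 1; 0; 2];
  [:: 0; 1; 2; 2; 2; 1; 0; 0; 0; 1; 1];
  [:: 0; 1; 2; 1; 1; 0; 1; 2; 2; 0; 0];
  [:: 0; 2; 1; 1; 1; 0; 1; 1; 0; 1; 0];
  [:: 0; 1; 1; 1; 2; 0; 1; 2; 0; 0; 2];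
  [:: 0; 1; 1; 2; 2; 0; 1; 0; 2; 1; 0];
  [:: 0; 1; 2; 2; 1; 0; 1; 0; 1; 0; 2];
  [:: 0; 2; 1; 2; 1; 0; 1; 0; 0; 2; 1];
  [:: 0; 2; 1; 2; 2; 0; 0; 1; 1; 1; 0];
  [:: 0; 1; 2; 1; 1; 0; 0; 2; 2; 0; 1];
  [:: 0; 2; 1; 1; 2; 0; 0; 2; 0; 1; 1];
  [:: 0; 1; 1; 2; 1; 0; 0; 0; 1; 1; 1];
  [:: 0; 1; 1; 1; 0; 1; 1; 2; 1; 0; 0];
  [:: 0; 2; 2; 1; 0; 1; 1; 1; 0; 2; 0];
  [:: 0; 1; 1; 2; 0; 1; 2; 1; 0; 0; 2];
  [:: 0; 1; 1; 1; 0; 1; 1; 0; 1; 2; 0];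
  [:: 0; 1; 1; 1; 0; 1; 1; 0; 1; 0; 2];
  [:: 0; 2; 1; 2; 0; 1; 1; 0; 0; 2; 1];
  [:: 0; 1; 1; 2; 0; 2; 0; 2; 1; 1; 0];
  [:: 0; 1; 2; 1; 0; 2; 0; 1; 1; 0; 2];
  [:: 0; 1; 1; 2; 0; 2; 0; 2; 0; 1; 1];
  [:: 0; 1; 1; 1; 0; 2; 0; 0; 2; 2; 1];
  [:: 0; 1; 1; 1; 0; 0; 2; 1; 2; 2; 0];
  [:: 0; 2; 1; 1; 0; 0; 1; 1; 2; 0; 2];
  [:: 0; 1; 2; 1; 0; 0; 2; 1; 0; 1; 2];
  [:: 0; 1; 2; 1; 0; 0; 2; 0; 1; 1; 2];
  [:: 0; 1; 2; 2; 0; 0; 0; 1; 2; 1; 1];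
  [:: 0; 1; 1; 0; 1; 2; 2; 2; 1; 0; 0];
  [:: 0; 2; 1; 0; 2; 1; 2; 1; 0; 1; 0];
  [:: 0; 1; 1; 0; 2; 1; 1; 2; 0; 0; 2];
  [:: 0; 2; 1; 0; 2; 1; 2; 0; 1; 1; 0];
  [:: 0; 1; 1; 0; 1; 1; 2; 0; 2; 0; 2];
  [:: 0; 1; 2; 0; 1; 2; 1; 0; 0; 2; 1];
  [:: 0; 2; 1; 0; 1; 2; 0; 1; 2; 1; 0];
  [:: 0; 2; 1; 0; 1; 1; 0; 2; 2; 0; 1];
  [:: 0; 1; 1; 0; 2; 2; 0; 1; 0; 2; 1];
  [:: 0; 1; 1; 0; 1; 2; 0; 0; 1; 1; 1];
  [:: 0; 2; 2; 0; 1; 0; 1; 2; 1; 1; 0];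
  [:: 0; 1; 1; 0; 2; 0; 1; 2; 1; 0; 2];
  [:: 0; 2; 2; 0; 1; 0; 2; 1; 0; 1; 1];
  [:: 0; 1; 1; 0; 1; 0; 2; 0; 1; 1; 1];
  [:: 0; 1; 1; 0; 1; 0; 0; 2; 1; 1; 1];
  [:: 0; 2; 2; 0; 0; 1; 1; 2; 1; 1; 0];
  [:: 0; 2; 1; 0; 0; 1; 1; 2; 2; 0; 1];
  [:: 0; 1; 2; 0; 0; 1; 1; 1; 0; 1; 1];
  [:: 0; 1; 1; 0; 0; 2; 1; 0; 2; 1; 2];
  [:: 0; 1; 2; 0; 0; 2; 0; 1; 1; 1; 2];
  [:: 0; 1; 1; 0; 0; 0; 2; 1; 2; 2; 1];
  [:: 0; 1; 0; 1; 2; 2; 2; 1; 1; 0; 0];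
  [:: 0; 1; 0; 1; 2; 2; 2; 1; 0; 1; 0];
  [:: 0; 2; 0; 2; 1; 1; 1; 2; 0; 0; 1];
  [:: 0; 2; 0; 1; 1; 1; 2; 0; 1; 2; 0];
  [:: 0; 2; 0; 1; 2; 2; 1; 0; 1; 0; 1];
  [:: 0; 1; 0; 1; 2; 1; 1; 0; 0; 2; 2];
  [:: 0; 2; 0; 1; 1; 2; 0; 1; 2; 1; 0];
  [:: 0; 2; 0; 1; 1; 1; 0; 1; 1; 0; 1];
  [:: 0; 2; 0; 1; 2; 1; 0; 2; 0; 1; 1];
  [:: 0; 2; 0; 2; 1; 1; 0; 0; 1; 1; 2];
  [:: 0; 2; 0; 1; 1; 0; 2; 1; 1; 2; 0];
  [:: 0; 2; 0; 1; 1; 0; 1; 1; 2; 0; 2];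
  [:: 0; 1; 0; 2; 1; 0; 1; 1; 0; 2; 2];
  [:: 0; 2; 0; 1; 1; 0; 2; 0; 1; 2; 1];
  [:: 0; 1; 0; 2; 1; 0; 0; 1; 1; 2; 2];
  [:: 0; 1; 0; 2; 0; 2; 1; 1; 1; 2; 0];
  [:: 0; 1; 0; 2; 0; 1; 2; 2; 1; 0; 1];
  [:: 0; 1; 0; 2; 0; 1; 1; 1; 0; 1; 1];
  [:: 0; 2; 0; 2; 0; 1; 1; 0; 1; 1; 2];
  [:: 0; 1; 0; 1; 0; 2; 0; 1; 2; 2; 1];
  [:: 0; 2; 0; 1; 0; 0; 1; 1; 2; 1; 2];
  [:: 0; 2; 0; 0; 1; 2; 1; 1; 2; 1; 0];
  [:: 0; 1; 0; 0; 1; 1; 2; 1; 2; 0; 2];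
  [:: 0; 1; 0; 0; 2; 1; 1; 1; 0; 1; 1];
  [:: 0; 2; 0; 0; 2; 2; 1; 0; 1; 1; 1];
  [:: 0; 1; 0; 0; 2; 1; 0; 2; 1; 2; 1];
  [:: 0; 1; 0; 0; 1; 0; 1; 2; 2; 2; 1];
  [:: 0; 1; 0; 0; 0; 1; 1; 1; 2; 1; 1];
  [:: 0; 0; 2; 1; 2; 1; 1; 1; 2; 0; 0];
  [:: 0; 0; 1; 1; 1; 2; 1; 1; 0; 1; 0];
  [:: 0; 0; 1; 2; 1; 1; 2; 1; 0; 0; 2];
  [:: 0; 0; 2; 1; 2; 2; 1; 0; 1; 1; 0];
  [:: 0; 0; 1; 1; 2; 1; 2; 0; 2; 0; 1];
  [:: 0; 0; 1; 1; 2; 1; 1; 0; 0; 2; 2];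
  [:: 0; 0; 1; 2; 1; 1; 0; 1; 2; 2; 0];
  [:: 0; 0; 2; 1; 1; 1; 0; 1; 1; 0; 1];
  [:: 0; 0; 1; 1; 2; 2; 0; 1; 0; 2; 1];
  [:: 0; 0; 2; 1; 2; 2; 0; 0; 1; 1; 1];
  [:: 0; 0; 1; 1; 1; 0; 1; 1; 2; 1; 0];
  [:: 0; 0; 2; 2; 1; 0; 1; 1; 1; 0; 2];
  [:: 0; 0; 1; 1; 1; 0; 1; 1; 0; 1; 2];
  [:: 0; 0; 1; 1; 2; 0; 2; 0; 2; 1; 1];
  [:: 0; 0; 1; 1; 1; 0; 0; 2; 1; 2; 2];
  [:: 0; 0; 1; 1; 0; 1; 2; 2; 2; 1; 0];
  [:: 0; 0; 2; 1; 0; 2; 1; 2; 1; 0; 1];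
  [:: 0; 0; 2; 1; 0; 2; 1; 2; 0; 1; 1];
  [:: 0; 0; 2; 1; 0; 1; 2; 0; 1; 2; 1];
  [:: 0; 0; 2; 2; 0; 1; 0; 1; 2; 1; 1];
  [:: 0; 0; 2; 2; 0; 0; 1; 1; 2; 1; 1];
  [:: 0; 0; 1; 0; 1; 2; 2; 2; 1; 1; 0];
  [:: 0; 0; 1; 0; 1; 2; 2; 2; 1; 0; 1];
  [:: 0; 0; 2; 0; 1; 1; 1; 2; 0; 1; 2];
  [:: 0; 0; 2; 0; 1; 1; 2; 0; 1; 2; 1];
  [:: 0; 0; 2; 0; 1; 1; 0; 2; 1; 1; 2];
  [:: 0; 0; 1; 0; 2; 0; 2; 1; 1; 1; 2];
  [:: 0; 0; 2; 0; 0; 1; 2; 1; 1; 2; 1];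
  [:: 0; 0; 0; 2; 1; 2; 1; 1; 1; 2; 0];
  [:: 0; 0; 0; 1; 1; 1; 2; 1; 1; 0; 1];
  [:: 0; 0; 0; 2; 1; 2; 2; 1; 0; 1; 1];
  [:: 0; 0; 0; 1; 2; 1; 1; 0; 1; 2; 2];
  [:: 0; 0; 0; 1; 1; 1; 0; 1; 1; 2; 1];
  [:: 0; 0; 0; 1; 1; 0; 1; 2; 2; 2; 1];
  [:: 0; 0; 0; 1; 0; 1; 2; 2; 2; 1; 1];
  [:: 0; 0; 0; 0; 2; 1; 2; 1; 1; 1; 2]].

Lemma check2_ext P P' L : (forall a b, P a b = P' a b) -> check2 P L = check2 P' L.
Proof. by move=> E; elim: L => //= a L ->; congr (_ && _); apply: eq_all => b. Qed.
Lemma check3_ext R R' L : (forall a b c, R a b c = R' a b c) -> check3 R L = check3 R' L.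
Proof. by move=> E; elim: L => //= a L ->; congr (_ && _); apply: check2_ext. Qed.

Definition L2 : seq (seq nat) := map (map sw) L1.

Definition nzl (x : seq nat) : seq bool := map (fun a => a != 0) x.

Definition pairs_ok (L : seq (seq nat)) : bool :=
  all (fun x => all (fun y => (x == y) || pairok x y) L) L.

Lemma F_basic :
  [&& all valid L0, all valid L1, all valid L2, uniq L1 & uniq L2] = true.
Proof. vm_compute. reflexivity. Qed.

Lemma F_basic2 :
  [&& size L0 == 37, size L1 == 'C(11, 7), size L2 == 'C(11, 7) & uniq L0] = true.
Proof. vm_compute. reflexivity. Qed.

Lemma F_weights :
  [&& all (fun l => count (fun a => a != 0) l == 3) L0,
      all (fun l => count (fun a => a != 0) l == 7) L1 &
      all (fun l => count (fun a => a != 0) l == 7) L2] = true.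
Proof. vm_compute. reflexivity. Qed.

Lemma F_pairs : [&& pairs_ok L0, pairs_ok L1 & pairs_ok L2] = true.
Proof. vm_compute. reflexivity. Qed.

Lemma F_supp : check2 (fun x y => nzl x != nzl y) L0 = true.
Proof. vm_compute. reflexivity. Qed.

Lemma F_c0 : check3 covl L0 = true.
Proof. vm_compute. reflexivity. Qed.

Lemma F_c1 : check3 covl L1 = true.
Proof. vm_compute. reflexivity. Qed.

Lemma F_c2 : check3 covl L2 = true.
Proof.
rewrite /L2 check3_map (@check3_ext _ covl); first exact: F_c1.
by move=> a b c; rewrite covl_sw.
Qed.

Lemma F_m2 : all (fun x => all (fun y => all (fun z => covl x y z) (L1 ++ L2)) L0) L0 = true.
Proof. vm_compute. reflexivity. Qed.

Lemma F_m3 : all (fun x => all (fun y => all (fun z => covl x y z) L2) L1) L0 = true.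
Proof. vm_compute. reflexivity. Qed.

Lemma wt L n : all valid L -> all (fun l => count (fun a => a != 0) l == n) L ->
    forall s, s \in mkS L -> weight s = n.
Proof.
move=> /allP V /allP W s /inS[l Hl ->].
rewrite weight_mk; last exact: V.
exact/eqP/W.
Qed.

Lemma V0 : all valid L0. Proof. case/and5P: F_basic => H _ _ _ _; exact: H. Qed.
Lemma V1 : all valid L1. Proof. case/and5P: F_basic => _ H _ _ _; exact: H. Qed.
Lemma V2 : all valid L2. Proof. case/and5P: F_basic => _ _ H _ _; exact: H. Qed.

Lemma Wt0 s : s \in mkS L0 -> weight s = 3.
Proof. apply: wt; [exact: V0|case/and3P: F_weights => H _ _; exact: H]. Qed.
Lemma Wt1 s : s \in mkS L1 -> weight s = 7.
Proof. apply: wt; [exact: V1|case/and3P: F_weights => _ H _; exact: H]. Qed.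
Lemma Wt2 s : s \in mkS L2 -> weight s = 7.
Proof. apply: wt; [exact: V2|case/and3P: F_weights => _ _ H; exact: H]. Qed.

Lemma A0 : admissible (mkS L0).
Proof. apply: adm_of; [exact: V0|case/and3P: F_pairs => H _ _; exact: H|exact: F_c0]. Qed.
Lemma A1 : admissible (mkS L1).
Proof. apply: adm_of; [exact: V1|case/and3P: F_pairs => _ H _; exact: H|exact: F_c1]. Qed.
Lemma A2 : admissible (mkS L2).
Proof. apply: adm_of; [exact: V2|case/and3P: F_pairs => _ _ H; exact: H|exact: F_c2]. Qed.

Lemma C0 : #|mkS L0| = 37.
Proof.
rewrite card_mkS; [|exact: V0|case/and4P: F_basic2 => _ _ _ H; exact: H].
apply/eqP; case/and4P: F_basic2 => H _ _ _; exact: H.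
Qed.
Lemma C1 : #|mkS L1| = 'C(11, 7).
Proof.
rewrite card_mkS; [|exact: V1|case/and5P: F_basic => _ _ _ H _; exact: H].
apply/eqP; case/and4P: F_basic2 => _ H _ _; exact: H.
Qed.
Lemma C2 : #|mkS L2| = 'C(11, 7).
Proof.
rewrite card_mkS; [|exact: V2|case/and5P: F_basic => _ _ _ _ H; exact: H].
apply/eqP; case/and4P: F_basic2 => _ _ H _; exact: H.
Qed.

Lemma M2 x y z : x \in mkS L0 -> y \in mkS L0 -> z \in mkS L1 :|: mkS L2 -> covered x y z.
Proof.
move=> /inS[a Ha ->] /inS[b Hb ->] Hz.
have [c Hc ->] : exists2 c, c \in L1 ++ L2 & z = mkvec c.
  move: Hz; rewrite in_setU => /orP[] /inS[c Hc ->]; exists c;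
  [rewrite mem_cat; apply/orP; left; exact: Hc|reflexivity|
   rewrite mem_cat; apply/orP; right; exact: Hc|reflexivity].
apply: covered_mk.
- exact: (allP V0).
- exact: (allP V0).
- by move: Hc; rewrite mem_cat => /orP[]; [apply: (allP V1)|apply: (allP V2)].
- exact: (allP (allP (allP F_m2 a Ha) b Hb) c Hc).
Qed.

Lemma M3 x y z : x \in mkS L0 -> y \in mkS L1 -> z \in mkS L2 -> covered x y z.
Proof.
move=> /inS[a Ha ->] /inS[b Hb ->] /inS[c Hc ->].
apply: covered_mk; [exact: (allP V0)|exact: (allP V1)|exact: (allP V2)|].
exact: (allP (allP (allP F_m3 a Ha) b Hb) c Hc).
Qed.

Lemma SU s s' : s \in mkS L0 -> s' \in mkS L0 -> s != s' -> supp s != supp s'.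
Proof.
move=> /inS[x Hx ->] /inS[y Hy ->] ne.
have xy : x != y by apply: contraNneq ne => ->.
have H := check2P (fun a b => congr1 negb (eq_sym (nzl a) (nzl b))) F_supp Hx Hy xy.
apply: contraNneq H => E.
rewrite /nzl (supp_mk _ _ E); first exact: eqxx.
- exact: (allP V0).
- exact: (allP V0).
Qed.

Theorem lemma3p7 :
  exists S0 S1 S2 : {set vec 11},
    [/\ meta_extendable S0 S1 S2,
        #|S1| = 'C(11, 7) /\ (forall s, s \in S1 -> weight s = 7),
        #|S2| = 'C(11, 7) /\ (forall s, s \in S2 -> weight s = 7),
        #|S0| = 37 /\ (forall s, s \in S0 -> weight s = 3) &
        (forall s s', s \in S0 -> s' \in S0 -> s != s' -> supp s != supp s')].
Proof.
exists (mkS L0), (mkS L1), (mkS L2); split.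
- split.
  + split; [exact: A0|exact: A1|exact: A2].
  + move=> s s' Hs; rewrite in_setU (Wt0 Hs) => /orP[H|H].
      by rewrite (Wt1 H).
    by rewrite (Wt2 H).
  + exact: M2.
  + exact: M3.
- split; [exact: C1|exact: Wt1].
- split; [exact: C2|exact: Wt2].
- split; [exact: C0|exact: Wt0].
- exact: SU.
Qed.
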